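(* Let $q$ be a prime power, $n\ge 1$, and $k\ge1$ an integer with $q>2k+1$. Then \[\dim(\operatorname{Hull}(C_{n,k}^q))=\dim(C_{n,k}^q)-1=\binom{n+k}{k}-1.\] Moreover, $\{\operatorname{ev}(m)\}_{m\in\mathcal{M}}$ is a basis of $\operatorname{Hull}(C_{n,k}^q)$, where $\mathcal{M}$ is the set of all monomials of degree $k$ in $x_0,\dots,x_n$ other than $x_n^k$.
   Context: For a prime power $q$ and integers $n\ge 1$, $k\ge 0$, the projective Reed-Muller code $C_{n,k}^q\subseteq \mathbb{F}_q^N$, $N=\frac{q^{n+1}-1}{q-1}$, is defined as follows. For each point of $\mathbb{P}^n(\mathbb{F}_q)$ choose the affine representative $(p_0,\dots,p_n)\in\mathbb{F}_q^{n+1}\setminus\{0\}$ whose left-most nonzero coordinate equals $1$, and fix an ordering $P_1',\dots,P_N'$ of these representatives; for a polynomial $F$ write $\operatorname{ev}(F)=(F(P_1'),\dots,F(P_N'))$. Then $C_{n,k}^q=\{\operatorname{ev}(F) : F\in \mathbb{F}_q[x_0,\dots,x_n]_k\}$, where $\mathbb{F}_q[x_0,\dots,x_n]_k$ is the space of homogeneous polynomials of degree $k$ together with $0$. Duals are with respect to the standard dot product, and $\operatorname{Hull}(C)=C\cap C^\perp$. *)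

(* Defs.v *)
From HB Require Import structures.
From mathcomp Require Import all_boot all_order all_algebra.
From mathcomp Require Import all_field.
From mathcomp Require Import mpoly.
Set Implicit Arguments.
Unset Strict Implicit.
Unset Printing Implicit Defensive.
Import Order.TTheory GRing.Theory.
Local Open Scope ring_scope.

Section ProjRM.
Variables (F : finFieldType) (n : nat).

(* affine representative of a projective point: left-most nonzero coordinate is 1 *)
Definition normalized (v : 'rV[F]_(n.+1)) : bool :=
  [exists i : 'I_(n.+1), (v 0 i == 1) &&
     [forall j : 'I_(n.+1), (j < i)%N ==> (v 0 j == 0)]].

Definition proj_pts : {set 'rV[F]_(n.+1)} := [set v | normalized v].

Definition Npts : nat := #|proj_pts|.

Definition pt (i : 'I_Npts) : 'rV[F]_(n.+1) := @enum_val _ (mem proj_pts) i.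

Definition ev (p : {mpoly F[n.+1]}) : 'rV[F]_Npts :=
  \row_(i < Npts) p.@[fun j => pt i 0 j].

Definition dotv (u v : 'rV[F]_Npts) : F := \sum_(i < Npts) u 0 i * v 0 i.

Definition xn_pow (k : nat) : 'X_{1..n.+1} :=
  [multinom (if i == ord_max then k else 0%N) | i < n.+1].

Definition Mmon (k : nat) : seq 'X_{1..n.+1} :=
  [seq val m | m : 'X_{1..n.+1 < k.+1} in
     [pred m : 'X_{1..n.+1 < k.+1} | (mdeg (val m) == k) && (val m != xn_pow k)]].

End ProjRM.

(* Main.v *)
Require Import Defs.
From HB Require Import structures.
From mathcomp Require Import all_boot all_order all_algebra all_fingroup all_solvable.
From mathcomp Require Import all_field.
From mathcomp Require Import mpoly.
From mathcomp Require Import zify.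
Import Order.TTheory GRing.Theory.
Local Open Scope ring_scope.

Section PowSum.
Variable F : finFieldType.

Lemma cardF0 : (#|F|%:R : F) = 0.
Proof.
have := @expg_cardG (F : finZmodType) [set: F]%G (GRing.one F) (in_setT _).
by rewrite FinRing.zmodXgE cardsT.
Qed.

Lemma sumX_lt (e : nat) : (e < #|F|.-1)%N -> \sum_(x : F) x ^+ e = 0.
Proof.
case: e => [|e] he.
  rewrite (eq_bigr (fun _ => 1)) => [|x _]; last by rewrite expr0.
  by rewrite sumr_const cardF0.
have [a anz ae] : exists2 a : F, a != 0 & a ^+ e.+1 != 1.
  case: (pickP (fun a : F => (a != 0) && (a ^+ e.+1 != 1))) => [a /andP[]|H].
    by exists a.
  exfalso.
  have := @max_poly_roots F ('X^(e.+1) - 1) (enum (predC1 (0 : F))).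
  rewrite size_Xn_sub_1 // -cardE cardC1 ltnS leqNgt.
  rewrite he => Hm; suff: false by []; apply: Hm.
  - by rewrite -size_poly_eq0 size_Xn_sub_1.
  - apply/allP => x; rewrite mem_enum /= => xnz.
    have xnz' : x != 0 by []. have := H x; rewrite /= xnz' /= => /negbFE/eqP xe.
    by rewrite /root !hornerE xe subrr.
  - exact: enum_uniq.
have HS : \sum_(x : F) x ^+ e.+1 = a ^+ e.+1 * \sum_(x : F) x ^+ e.+1.
  rewrite mulr_sumr [LHS](reindex_inj (mulfI anz)) /=.
  by apply: eq_bigr => x _; rewrite exprMn.
move: HS; move: (\sum_(x : F) x ^+ e.+1) => S.
move/eqP; rewrite -subr_eq0 -{1}[S]mul1r -mulrBl mulf_eq0 subr_eq0 eq_sym.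
by rewrite (negbTE ae) => /eqP.
Qed.

Lemma sumX_card1 : \sum_(x : F) x ^+ #|F|.-1 = -1.
Proof.
rewrite (bigD1 0) //= expr0n.
have q1 : (#|F|.-1 != 0)%N.
  by rewrite -lt0n -ltnS (ltn_predK (finNzRing_gt1 F)) finNzRing_gt1.
rewrite (negbTE q1) add0r.
rewrite (eq_bigr (fun _ => 1)) => [|x xnz].
  rewrite sumr_const cardC1; apply/eqP; rewrite -subr_eq0 opprK -mulrSr.
  by rewrite (ltn_predK (finNzRing_gt1 F)) cardF0.
apply/eqP; rewrite -(inj_eq (mulfI xnz)) -exprS (ltn_predK (finNzRing_gt1 F)).
by rewrite expf_card mulr1.
Qed.

Lemma exprF_red (x : F) (e : nat) : (#|F| <= e)%N -> x ^+ e = x ^+ (e - #|F|.-1).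
Proof.
move=> he; rewrite -(subnK he) exprD expf_card -exprSr.
congr (_ ^+ _). move: (finNzRing_gt1 F) he; case: #|F| => [|q] /= *; lia.
Qed.

End PowSum.

Section Tsum.
Variables (F : finFieldType) (n : nat).

Lemma sum_row_prod (f : 'I_n.+1 -> F -> F) :
  \sum_(v : 'rV[F]_n.+1) \prod_j f j (v 0 j) = \prod_j \sum_(x : F) f j x.
Proof.
rewrite bigA_distr_bigA /=.
rewrite (reindex (fun g : {ffun 'I_n.+1 -> F} => \row_j g j)) /=.
  by apply: eq_bigr => g _; apply: eq_bigr => j _; rewrite mxE.
exists (fun v : 'rV[F]_n.+1 => [ffun j => v 0 j]) => [g _|v _].
  by apply/ffunP => j; rewrite ffunE mxE.
by apply/rowP => j; rewrite mxE ffunE.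
Qed.

Definition Q (i : 'I_n.+1) (v : 'rV[F]_n.+1) : bool :=
  (v 0 i == 1) && [forall j : 'I_n.+1, (j < i)%N ==> (v 0 j == 0)].

Lemma Q_uniq i i' v : Q i v -> Q i' v -> i = i'.
Proof.
move=> /andP[/eqP h1 /forallP h2] /andP[/eqP h1' /forallP h2'].
have nlt : forall a b : 'I_n.+1, v 0 a = 1 ->
    (forall j : 'I_n.+1, (j < b)%N ==> (v 0 j == 0)) -> ~~ (a < b)%N.
  move=> a b ha hb; apply/negP => lt.
  have := implyP (hb a) lt. rewrite ha. by move=> /eqP H; move: (oner_neq0 F); rewrite H eqxx.
case: (ltngtP i i') => [lt|lt|/ord_inj //].
  by move: (nlt _ _ h1 h2'); rewrite lt.
by move: (nlt _ _ h1' h2); rewrite lt.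
Qed.

Definition h (e : 'I_n.+1 -> nat) (i j : 'I_n.+1) (x : F) : F :=
  (if (j < i)%N then (x == 0)%:R else if j == i then (x == 1)%:R else 1) * x ^+ e j.

Definition c (e : 'I_n.+1 -> nat) (i j : 'I_n.+1) : F :=
  if (j < i)%N then 0 ^+ e j else if j == i then 1 else \sum_(x : F) x ^+ e j.

Lemma sum_h e i j : \sum_(x : F) h e i j x = c e i j.
Proof.
rewrite /h /c; case: ifP => _.
  rewrite (bigD1 0) //= eqxx mul1r big1 ?addr0 // => x /negbTE ->.
  by rewrite mul0r.
case: ifP => _.
  rewrite (bigD1 1) //= eqxx mul1r expr1n big1 ?addr0 // => x /negbTE ->.
  by rewrite mul0r.
by apply: eq_bigr => x _; rewrite mul1r.
Qed.

Lemma sumQ e i :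
  \sum_(v : 'rV[F]_n.+1) (if Q i v then \prod_j v 0 j ^+ e j else 0) =
  \prod_j c e i j.
Proof.
rewrite -(eq_bigr _ (fun j _ => sum_h e i j)) -sum_row_prod.
apply: eq_bigr => v _; rewrite /h.
case: ifP => Qv.
  apply: eq_bigr => j _.
  move: Qv => /andP[/eqP h1 /forallP h2].
  case: ifP => ji.
    by move: (h2 j); rewrite ji /= => /eqP ->; rewrite eqxx mul1r.
  case: ifP => [/eqP ->|_]; last by rewrite mul1r.
  by rewrite h1 eqxx mul1r.
move: Qv; rewrite /Q; case: (boolP (v 0 i == 1)) => /= vi.
  move=> /negbT /forallPn [j]; rewrite negb_imply => /andP[ji vj].
  rewrite (bigD1 j) //= ji (negbTE vj) mul0r mul0r //.
move=> _; rewrite (bigD1 i) //= ltnn eqxx (negbTE vi) mul0r mul0r //.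
Qed.

Definition T (e : 'I_n.+1 -> nat) : F :=
  \sum_(v in proj_pts F n) \prod_j v 0 j ^+ e j.

Lemma T_formula e : T e = \sum_(i < n.+1) \prod_j c e i j.
Proof.
rewrite /T -(eq_bigr _ (fun i _ => sumQ e i)) exchange_big /=.
rewrite big_mkcond /=; apply: eq_bigr => v _.
rewrite inE /normalized.
case: existsP => [[i Qi]|nQ].
  have {}Qi : Q i v by [].
  rewrite [RHS](bigD1 i) //= Qi [X in _ + X]big1 ?addr0 // => i' ii'.
  case: ifP => // Qi'; by rewrite (Q_uniq _ _ _ Qi Qi') eqxx in ii'.
rewrite big1 // => i _; case: ifP => // Qi; by case: nQ; exists i.
Qed.

End Tsum.

Section Tcases.
Variables (F : finFieldType) (n : nat).

Lemma ltn_ord_max (j : 'I_n.+1) : (j < n)%N = (j != ord_max).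
Proof.
apply/idP/idP => [jn|jm].
  by apply/eqP => E; move: jn; rewrite E /= ltnn.
have := ltn_ord j; rewrite ltnS leq_eqVlt => /orP[/eqP E|//].
by move: jm; rewrite (_ : j = ord_max) ?eqxx //; apply: ord_inj.
Qed.

Lemma T_caseA (e : 'I_n.+1 -> nat) : (forall j, (e j < #|F|.-1)%N) ->
  T F n e = if [forall j : 'I_n.+1, (j != ord_max) ==> (e j == 0%N)] then 1 else 0.
Proof.
move=> he; rewrite T_formula big_ord_recr /= big1 ?add0r => [|i _]; last first.
  rewrite (bigD1 ord_max) //= /c.
  have -> : (@ord_max n < widen_ord (leqnSn n) i)%N = false.
    by apply/negbTE; rewrite -leqNgt /=; apply: ltnW.
  have -> : (@ord_max n == widen_ord (leqnSn n) i) = false.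
    apply/negbTE/eqP => E; have := ltn_ord i.
    by rewrite -[X in (X < _)%N]/(nat_of_ord (widen_ord (leqnSn n) i)) -E /= ltnn.
  by rewrite sumX_lt // mul0r.
case: ifP => [/forallP H | /negbT /forallPn [j]].
  apply: big1 => j _; rewrite /c; case: ifP => ji.
    rewrite ltn_ord_max in ji.
    by move: (implyP (H j) ji) => /eqP ->; rewrite expr0.
  rewrite ifT //; apply/eqP; apply: ord_inj => /=.
  by move: ji; rewrite ltn_ord_max => /negbFE/eqP ->.
rewrite negb_imply => /andP [jm ej].
rewrite -ltn_ord_max in jm.
rewrite (bigD1 j) //= /c ifT //.
by rewrite expr0n (negbTE ej) mul0r.
Qed.

Lemma T_caseB (e : 'I_n.+1 -> nat) : (0 < e ord0)%N ->
  T F n e = \prod_(j < n.+1 | j != ord0) \sum_(x : F) x ^+ e j.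
Proof.
move=> he; rewrite T_formula big_ord_recl /= [X in _ + X]big1 ?addr0 => [|i _]; last first.
  rewrite (bigD1 ord0) //= /c.
  have -> : (@ord0 n < lift ord0 i)%N by [].
  by rewrite expr0n eqn0Ngt he mul0r.
rewrite (bigD1 ord0) //= /c ltnn eqxx mul1r.
by apply: eq_bigr => j jn; rewrite (negbTE jn).
Qed.

End Tcases.

Section Dot.
Variables (F : finFieldType) (n : nat).
Local Notation evX m := (@ev F n 'X_[m]).
Implicit Types (u v w : 'rV[F]_(Npts F n)) (p q : {mpoly F[n.+1]}) (c : F).

Lemma dot_evX (a b : 'X_{1..n.+1}) :
  dotv (evX a) (evX b) = T F n (fun j => (a j + b j)%N).
Proof.
rewrite /dotv /T [RHS](big_enum_val (fun v : 'rV[F]_n.+1 => \prod_j v 0 j ^+ (a j + b j)%N)).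
apply: eq_bigr => i _; rewrite !mxE !mevalX -big_split /=.
by apply: eq_bigr => j _; rewrite exprD.
Qed.

Lemma ev0 : @ev F n 0 = 0.
Proof. by apply/rowP => i; rewrite !mxE meval0. Qed.

Lemma evD p q : @ev F n (p + q) = @ev F n p + @ev F n q.
Proof. by apply/rowP => i; rewrite !mxE mevalD. Qed.

Lemma evZ c p : @ev F n (c *: p) = c *: @ev F n p.
Proof. by apply/rowP => i; rewrite !mxE mevalZ. Qed.

Lemma ev_expand p : @ev F n p = \sum_(m <- msupp p) p@_m *: evX m.
Proof.
rewrite {1}(mpolyE p) (big_morph (@ev F n) evD ev0).
by apply: eq_bigr => m _; rewrite evZ.
Qed.

Lemma dotv0 w : dotv 0 w = 0.
Proof. by rewrite /dotv big1 // => i _; rewrite mxE mul0r. Qed.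

Lemma dotvD u v w : dotv (u + v) w = dotv u w + dotv v w.
Proof. by rewrite /dotv -big_split; apply: eq_bigr => i _; rewrite mxE mulrDl. Qed.

Lemma dotvZ c u w : dotv (c *: u) w = c * dotv u w.
Proof. by rewrite /dotv mulr_sumr; apply: eq_bigr => i _; rewrite mxE mulrA. Qed.

Lemma dotv_sum (I : Type) (r : seq I) (P : pred I) (f : I -> 'rV[F]_(Npts F n)) w :
  dotv (\sum_(i <- r | P i) f i) w = \sum_(i <- r | P i) dotv (f i) w.
Proof. exact: (big_morph (fun u => dotv u w) (fun u v => dotvD u v w) (dotv0 w)). Qed.

Lemma dotv_ev p w : dotv (@ev F n p) w = \sum_(m <- msupp p) p@_m * dotv (evX m) w.
Proof.
by rewrite ev_expand dotv_sum; apply: eq_bigr => m _; rewrite dotvZ.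
Qed.

Lemma mnm_le_mdeg (a : 'X_{1..n.+1}) j : (a j <= mdeg a)%N.
Proof. by rewrite mdegE (bigD1 j) //= leq_addr. Qed.

Lemma xn_powE k (a : 'X_{1..n.+1}) : mdeg a = k ->
  (a == xn_pow n k) = [forall j : 'I_n.+1, (j != ord_max) ==> (a j == 0%N)].
Proof.
move=> ha; apply/eqP/forallP => [-> j|H].
  by apply/implyP => jm; rewrite mnmE (negbTE jm).
apply/mnmP => j; rewrite mnmE.
case: eqP => [->|/eqP jm]; last by apply/eqP; exact: (implyP (H j) jm).
rewrite -ha mdegE (bigD1 ord_max) //= big1 ?addn0 // => i im.
by apply/eqP; exact: (implyP (H i) im).
Qed.

Lemma dot_mon k (a b : 'X_{1..n.+1}) : mdeg a = k -> mdeg b = k ->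
  (2 * k + 1 < #|F|)%N ->
  dotv (evX a) (evX b) = if (a == xn_pow n k) && (b == xn_pow n k) then 1 else 0.
Proof.
move=> ha hb hq; rewrite dot_evX T_caseA; last first.
  move=> j; have := mnm_le_mdeg a j; have := mnm_le_mdeg b j.
  rewrite ha hb; move: hq; case: #|F| => [|q] //=; lia.
rewrite (xn_powE _ _ ha) (xn_powE _ _ hb).
congr (if _ then _ else _).
apply/forallP/andP => [H|[/forallP H1 /forallP H2] j].
  split; apply/forallP => j; apply/implyP => jm; have := implyP (H j) jm;
    by rewrite addn_eq0 => /andP[].
by apply/implyP => jm; rewrite addn_eq0 (implyP (H1 j) jm) (implyP (H2 j) jm).
Qed.

Definition bfun (a' : 'X_{1..n.+1}) : 'X_{1..n.+1} :=
  [multinom (if i == ord0 then 1%N else (#|F|.-1 - a' i)%N) | i < n.+1].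

Lemma mnm_eq_tail (a a' : 'X_{1..n.+1}) : mdeg a = mdeg a' ->
  (forall j, j != ord0 -> a j = a' j) -> a = a'.
Proof.
move=> hd H; apply/mnmP => j.
case: (eqVneq j ord0) => [->|jn]; last exact: H.
move: hd; rewrite !mdegE (bigD1 ord0) //= [X in (_ = X)%N -> _](bigD1 ord0) //=.
rewrite (eq_bigr (fun j => a' j)) => [|i /H //].
by move/addIn.
Qed.

Lemma dot_dual k (a a' : 'X_{1..n.+1}) : mdeg a = k -> mdeg a' = k ->
  (2 * k + 1 < #|F|)%N ->
  dotv (evX a) (evX (bfun a')) = if a == a' then (-1) ^+ n else 0.
Proof.
move=> ha ha' hq.
have hq1 : #|F| = (#|F|.-1).+1 by rewrite (ltn_predK hq).
rewrite dot_evX T_caseB; last by rewrite mnmE eqxx addn1.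
case: eqP => [<-|neq].
  rewrite (eq_bigr (fun _ => -1)) => [|j jn]; last first.
    rewrite mnmE (negbTE jn) subnKC ?sumX_card1 //.
    have := mnm_le_mdeg a j; rewrite ha; move: hq; rewrite hq1; lia.
  by rewrite prodr_const cardC1 card_ord.
have [j jn aj] : exists2 j, j != ord0 & a j != a' j.
  case: (pickP (fun j => (j != ord0) && (a j != a' j))) => [j /andP[]|H].
    by exists j.
  exfalso; apply: neq; apply: mnm_eq_tail; first by rewrite ha ha'.
  move=> j jn; have := H j; rewrite /= jn /= => /negbFE/eqP //.
rewrite (bigD1 j) //= mnmE (negbTE jn).
have := mnm_le_mdeg a j; have := mnm_le_mdeg a' j; rewrite ha ha' => h1 h2.
case: (ltngtP (a j) (a' j)) => [lt|gt|/eqP]; last by rewrite (negbTE aj).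
  by rewrite sumX_lt ?mul0r //; move: hq; rewrite hq1 /=; lia.
rewrite (eq_bigr (fun x => x ^+ (a j - a' j)%N)) => [|x _].
  by rewrite sumX_lt ?mul0r //; move: hq; rewrite hq1 /=; lia.
rewrite exprF_red; last by move: hq; rewrite hq1 /=; lia.
congr (_ ^+ _); move: hq; rewrite hq1 /=; lia.
Qed.

End Dot.

Lemma free_mon (F : finFieldType) (n k : nat) (s : seq 'X_{1..n.+1}) :
  (2 * k + 1 < #|F|)%N -> uniq s -> all (fun m => mdeg m == k) s ->
  free (map (fun m => @ev F n 'X_[m]) s).
Proof.
move=> hq us ds.
suff : free (in_tuple (map (fun m => @ev F n 'X_[m]) s)) by [].
apply/freeP => kk H i.
have hi : (i < size s)%N by rewrite -(size_map (fun m => @ev F n 'X_[m])) ltn_ord.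
have degn : forall j, (j < size s)%N -> mdeg (nth 0%MM s j) = k.
  by move=> j hj; apply/eqP; exact: (allP ds _ (mem_nth _ hj)).
have := congr1 (fun u => dotv u (@ev F n 'X_[bfun F n (nth 0%MM s i)])) H.
rewrite /= dotv0 dotv_sum (bigD1 i) //= big1 ?addr0 => [|j ji].
  rewrite dotvZ (nth_map 0%MM) // (dot_dual F n k) ?degn // eqxx.
  move/eqP; rewrite mulf_eq0 => /orP[/eqP //|].
  by rewrite expf_eq0 oppr_eq0 (negbTE (oner_neq0 F)) andbF.
have hj : (j < size s)%N by rewrite -(size_map (fun m => @ev F n 'X_[m])) ltn_ord.
rewrite dotvZ (nth_map 0%MM) // (dot_dual F n k) ?degn // nth_uniq //.
by rewrite (inj_eq val_inj) (negbTE ji) mulr0.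
Qed.

Lemma mdeg_xn (n k : nat) : mdeg (xn_pow n k) = k.
Proof.
rewrite mdegE (bigD1 ord_max) //= mnmE eqxx big1 ?addn0 // => i im.
by rewrite mnmE (negbTE im).
Qed.

Lemma Mmem (n k : nat) (m : 'X_{1..n.+1}) :
  (m \in Mmon n k) = (mdeg m == k) && (m != xn_pow n k).
Proof.
apply/idP/idP.
  by case/mapP => x; rewrite mem_enum => /andP[h1 h2] ->; rewrite h1 h2.
move=> /andP[h1 h2].
have hb : (mdeg m < k.+1)%N by rewrite (eqP h1).
apply/mapP; exists (BMultinom hb) => //.
by rewrite mem_enum; apply/andP; split.
Qed.

Lemma Muniq (n k : nat) : uniq (Mmon n k).
Proof. by rewrite map_inj_uniq ?enum_uniq //; exact: val_inj. Qed.

Theorem mainTheorem8 (F : finFieldType) (n k : nat)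
  (C D : {vspace 'rV[F]_(Npts F n)}) :
  (1 <= n)%N -> (1 <= k)%N -> (2 * k + 1 < #|F|)%N ->
  (forall c, c \in C <-> exists p : {mpoly F[n.+1]}, p \is k.-homog /\ c = ev p) ->
  (forall x, x \in D <-> forall c, c \in C -> dotv c x = 0) ->
  [/\ \dim (C :&: D) = (\dim C).-1,
      (\dim C).-1 = ('C(n + k, k)).-1
    & basis_of (C :&: D)%VS [seq ev 'X_[m] | m <- Mmon n k]].
Proof.
move=> hn hk hq HC HD.
pose evX (m : 'X_{1..n.+1}) := @ev F n 'X_[m].
pose L := [seq s2m t | t : k.-tuple 'I_n.+1 <- enum (basis n.+1 k)].
have Lcov : forall m, (m \in L) = (mdeg m == k) by move=> m; rewrite basis_cover.
have Luniq : uniq L := uniq_basis n.+1 k.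
have Lsize : size L = 'C(k + n, k) := size_basis n k.
pose B := map evX L.
have freeB : free B.
  apply: (free_mon F n k) => //; apply/allP => m; by rewrite Lcov.
have CB : (C <= <<B>>)%VS.
  apply/subvP => c /HC [p [hp ->]].
  rewrite ev_expand big_seq; apply: memv_suml => m mp; apply: memvZ; apply: memv_span.
  apply: (map_f evX); rewrite Lcov; apply/eqP; exact: (dhomogP _ _ _ hp).
have BC : (<<B>> <= C)%VS.
  apply/span_subvP => v /mapP [m mL ->]; apply/HC; exists 'X_[m]; split => //.
  by rewrite dhomogX -Lcov.
have dimC : \dim C = size L.
  have dimB : \dim <<B>> = size L by rewrite (eqP freeB) size_map.
  by rewrite -dimB; apply/eqP; rewrite eqn_leq !dimvS.
have xnL : xn_pow n k \in L by rewrite Lcov mdeg_xn.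
have sizeM : size (Mmon n k) = (size L).-1.
  have pe : perm_eq (Mmon n k) (filter (predC1 (xn_pow n k)) L).
    apply: uniq_perm; [exact: Muniq | by rewrite filter_uniq |].
    by move=> m; rewrite mem_filter Mmem Lcov andbC.
  rewrite (perm_size pe) size_filter.
  have := count_predC (pred1 (xn_pow n k)) L.
  rewrite (count_uniq_mem _ Luniq) xnL /= => <-.
  by rewrite add1n.
pose BM := map evX (Mmon n k).
have freeBM : free BM.
  apply: (free_mon F n k) => //; first exact: Muniq.
  by apply/allP => m; rewrite Mmem => /andP[].
have subH : (<<BM>> <= C :&: D)%VS.
  apply/span_subvP => v /mapP [m mM ->]; rewrite memv_cap.
  move: mM; rewrite Mmem => /andP [dm mxn].
  apply/andP; split.
    apply/HC; exists 'X_[m]; split => //; by rewrite dhomogX.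
  apply/HD => c /HC [p [hp ->]].
  rewrite dotv_ev big_seq big1 // => m' m'p.
  rewrite (dot_mon F n k) ?(eqP dm) //; last exact: (dhomogP _ _ _ hp).
  by rewrite (negbTE mxn) andbF mulr0.
have xnC : evX (xn_pow n k) \in C.
  apply/HC; exists 'X_[xn_pow n k]; split => //; by rewrite dhomogX; apply/eqP; exact: mdeg_xn.
have xnD : evX (xn_pow n k) \notin D.
  apply/negP => /HD /(_ _ xnC).
  rewrite (dot_mon F n k) ?mdeg_xn // eqxx => /eqP.
  by rewrite (negbTE (oner_neq0 F)).
have dimH : (\dim (C :&: D) < \dim C)%N.
  rewrite ltnNge; apply/negP => le.
  have : (C :&: D)%VS == C by rewrite eqEdim capvSl le.
  move/eqP => E; move: xnD.
  have : evX (xn_pow n k) \in (C :&: D)%VS by rewrite E.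
  by rewrite memv_cap => /andP[_ ->].
have dimH2 : \dim (C :&: D) = size (Mmon n k).
  apply/eqP; rewrite eqn_leq; apply/andP; split.
    by rewrite sizeM -dimC -ltnS (ltn_predK dimH).
  have dimBM : \dim <<BM>> = size (Mmon n k) by rewrite (eqP freeBM) size_map.
  by rewrite -dimBM dimvS.
split.
- by rewrite dimH2 sizeM dimC.
- by rewrite dimC Lsize addnC.
rewrite basisEfree freeBM subH /= size_map dimH2 //.
Qed.
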